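(* The group $N/g_SN$ is isomorphic to $\mathbb{Z}/g_S\mathbb{Z}$. Moreover, for every finite $1\leq k\leq\lvert S\rvert$, the group $N/g_kN$ is isomorphic to a subgroup of $\mathbb{Z}/g_k\mathbb{Z}$.
   Context: $S\subset\{2,3,\dots\}$ is a non-empty (possibly infinite) set of pairwise relatively prime integers, $N:=\mathbb{Z}[\{1/p:p\in S\}]\subset\mathbb{Q}$, $g_S:=\gcd(\{p-1:p\in S\})$, and for $1\leq k\leq\lvert S\rvert$, $g_k:=\gcd(p_1-1,\dots,p_k-1)$ where $p_1<\dots<p_k$ are the $k$ smallest elements of $S$. *)

(* Defs.v *)
From mathcomp Require Import all_boot all_order all_algebra.
Set Implicit Arguments. Unset Strict Implicit. Unset Printing Implicit Defensive.
Import Order.TTheory GRing.Theory Num.Theory.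
Local Open Scope ring_scope.

Definition admissible_set (S : nat -> Prop) : Prop :=
  [/\ exists p, S p,
      (forall p, S p -> (2 <= p)%N) &
      (forall p q, S p -> S q -> p <> q -> coprime p q)].

(* N = Z[{1/p : p in S}] : the subring of Q generated by the 1/p, p in S,
   i.e. the intersection of all subrings of Q containing every 1/p. *)
Definition N_S (S : nat -> Prop) (x : rat) : Prop :=
  forall P : rat -> Prop,
    P 1 ->
    (forall a b, P a -> P b -> P (a - b)) ->
    (forall a b, P a -> P b -> P (a * b)) ->
    (forall p, S p -> P (p%:R)^-1) ->
    P x.

Definition mulN (S : nat -> Prop) (g : nat) (x : rat) : Prop :=
  exists y, N_S S y /\ x = g%:R * y.

Definition is_gcd_S (S : nat -> Prop) (g : nat) : Prop :=
  (forall p, S p -> (g %| p.-1)%N) /\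
  (forall d, (forall p, S p -> (d %| p.-1)%N) -> (d %| g)%N).

Definition smallest_elems (S : nat -> Prop) (s : seq nat) : Prop :=
  [/\ sorted ltn s,
      (forall p, p \in s -> S p) &
      (forall p q, S p -> p \notin s -> q \in s -> (q < p)%N)].

Definition gcd_seq (s : seq nat) : nat := foldr gcdn 0%N [seq p.-1 | p <- s].

(* A map phi : N -> Z/gZ (values taken as integers read modulo g) that is a
   group homomorphism and induces an INJECTIVE, well-defined map on N/gN:
   phi x = phi y in Z/gZ  iff  x - y in gN. *)
Definition quot_embedding (S : nat -> Prop) (g : nat) (phi : rat -> int) : Prop :=
  (forall x y, N_S S x -> N_S S y -> (phi (x + y) = phi x + phi y %[mod g%:Z])%Z) /\
  (forall x y, N_S S x -> N_S S y ->
     ((phi x = phi y %[mod g%:Z])%Z <-> mulN S g (x - y))).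

Definition quot_embeds_in_Zmod (S : nat -> Prop) (g : nat) : Prop :=
  exists phi : rat -> int, quot_embedding S g phi.

Definition quot_iso_Zmod (S : nat -> Prop) (g : nat) : Prop :=
  exists phi : rat -> int, quot_embedding S g phi /\
    (forall z : int, exists x, N_S S x /\ (phi x = z %[mod g%:Z])%Z).

(* Main.v *)
Require Import Defs.
From mathcomp Require Import all_boot all_order all_algebra.
From mathcomp Require Import ring.
From Stdlib Require Import ClassicalEpsilon Classical.
Set Implicit Arguments. Unset Strict Implicit. Unset Printing Implicit Defensive.
Import Order.TTheory GRing.Theory Num.Theory.

Section Aux.
Local Open Scope ring_scope.
Variable S : nat -> Prop.

Lemma NS_1 : N_S S 1. Proof. by rewrite /N_S => P h1 hs hm hi. Qed.
Lemma NS_sub x y : N_S S x -> N_S S y -> N_S S (x - y).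
Proof. move=> hx hy P h1 hs hm hi; apply: (hs); [exact: (hx P h1 hs hm hi)|exact: (hy P h1 hs hm hi)]. Qed.
Lemma NS_mul x y : N_S S x -> N_S S y -> N_S S (x * y).
Proof. move=> hx hy P h1 hs hm hi; apply: (hm); [exact: (hx P h1 hs hm hi)|exact: (hy P h1 hs hm hi)]. Qed.
Lemma NS_inv p : S p -> N_S S (p%:R)^-1.
Proof. by rewrite /N_S => hp P h1 hs hm hi; apply: hi. Qed.
Lemma NS_0 : N_S S 0.
Proof. by rewrite -(subrr 1); apply: NS_sub; apply: NS_1. Qed.
Lemma NS_opp x : N_S S x -> N_S S (- x).
Proof. by move=> hx; rewrite -sub0r; apply: NS_sub => //; apply: NS_0. Qed.
Lemma NS_add x y : N_S S x -> N_S S y -> N_S S (x + y).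
Proof. by move=> hx hy; rewrite -[y]opprK; apply: NS_sub => //; apply: NS_opp. Qed.
Lemma NS_nat n : N_S S n%:R.
Proof. elim: n => [|n IH]; first exact: NS_0.
by rewrite -addn1 natrD; apply: NS_add => //; apply: NS_1. Qed.
Lemma NS_int (z : int) : N_S S z%:~R.
Proof. case: z => n; first exact: NS_nat.
by rewrite NegzE intrN; apply: NS_opp; apply: NS_nat. Qed.
Lemma NS_exp x n : N_S S x -> N_S S (x ^+ n).
Proof. move=> hx; elim: n => [|n IH]; first by rewrite expr0; apply: NS_1.
by rewrite exprS; apply: NS_mul. Qed.

Lemma mulN_sub g x y : mulN S g x -> mulN S g y -> mulN S g (x - y).
Proof. move=> [a [ha ->]] [b [hb ->]]; exists (a - b); split; first exact: NS_sub.
by rewrite mulrBr. Qed.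
Lemma mulN_0 g : mulN S g 0.
Proof. by exists 0; split; [apply: NS_0| rewrite mulr0]. Qed.
Lemma mulN_add g x y : mulN S g x -> mulN S g y -> mulN S g (x + y).
Proof. move=> hx hy; rewrite -[y]opprK; apply: mulN_sub => //.
rewrite -sub0r; exact: mulN_sub (mulN_0 g) hy. Qed.
Lemma mulN_mulr g x y : mulN S g x -> N_S S y -> mulN S g (x * y).
Proof. move=> [a [ha ->]] hy; exists (a * y); split; first exact: NS_mul.
by rewrite mulrA. Qed.
Lemma mulN_g g : mulN S g g%:R.
Proof. by exists 1; split; [apply: NS_1| rewrite mulr1]. Qed.
Lemma mulN_int g (z : int) : (g%:Z %| z)%Z -> mulN S g z%:~R.
Proof. case/dvdzP => q ->; exists q%:~R; split; first exact: NS_int.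
by rewrite intrM mulrC. Qed.

End Aux.

Lemma pow_rep (p g : nat) : 0 < p -> 0 < g -> exists i e, g %| p ^ i * (p ^ e.+1 - 1).
Proof.
move=> p0 g0.
pose f (i : 'I_g.+1) : 'I_g := Ordinal (ltn_pmod (p ^ i) g0).
have [i [j [fij nij]]] : exists i j, f i = f j /\ i <> j.
  apply: NNPP => H.
  have inj : injective f.
    move=> i j E; apply: NNPP => ne; apply: H; exists i, j; split => //.
  by have := leq_card f inj; rewrite !card_ord ltnn.
have E : p ^ i %% g = p ^ j %% g by move: fij => /(congr1 val).
clear fij.
wlog lt : i j E nij / i < j.
  move=> W; case: (ltngtP i j) => h.
  - exact: W E nij h.
  - by apply: (W j i) => // eq; apply: nij.
  - by case: nij; apply: val_inj.
exists i, (j - i).-1.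
rewrite prednK ?subn_gt0 // mulnBr muln1 -expnD subnKC ?(ltnW lt) //.
rewrite -eqn_mod_dvd; last by apply: leq_pexp2l => //; apply: ltnW.
by rewrite E.
Qed.

Section Aux2.
Local Open Scope ring_scope.
Variable S : nat -> Prop.
Hypothesis hS : forall p, S p -> (0 < p)%N.
Variable g : nat.
Hypothesis g0 : (0 < g)%N.

Lemma inv_rep p : S p -> exists n : int, mulN S g ((p%:R)^-1 - n%:~R).
Proof.
move=> Sp; have p0 := hS Sp.
have [i [e dv]] := pow_rep p0 g0.
exists (p ^ e)%N%:Z.
exists (- ((p ^ i * (p ^ e.+1 - 1)) %/ g)%N%:R * ((p%:R)^-1) ^+ i.+1); split.
  apply: NS_mul; first by apply: NS_opp; apply: NS_nat.
  by apply: NS_exp; apply: NS_inv.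
have pn0 : (p%:R : rat) != 0 by rewrite pnatr_eq0 -lt0n.
rewrite mulNr mulrN mulrA -natrM mulnC divnK // natrM natrB; last by rewrite expn_gt0 p0.
rewrite !natrX /=.
rewrite -pmulrn natrX.
rewrite exprVn exprS (exprS _ i) invfM.
have an0 : (p%:R : rat) ^+ i != 0 by rewrite expf_neq0.
move: an0; move: ((p%:R : rat) ^+ i) => a an.
move: ((p%:R : rat) ^+ e) => b.
move: pn0; move: (p%:R : rat) => q qn.
field. by rewrite an qn.
Qed.

Lemma ZgN x : N_S S x -> exists n : int, mulN S g (x - n%:~R).
Proof.
move=> hx.
suff [] : N_S S x /\ exists n : int, mulN S g (x - n%:~R) by [].
apply: (hx (fun x => N_S S x /\ exists n : int, mulN S g (x - n%:~R))).
- split; first exact: NS_1.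
  by exists 1; rewrite /= subrr; apply: mulN_0.
- move=> a b [ha [n hn]] [hb [m hm]]; split; first exact: NS_sub.
  exists (n - m); rewrite intrB.
  have -> : a - b - (n%:~R - m%:~R) = (a - n%:~R) - (b - m%:~R) by ring.
  exact: mulN_sub.
- move=> a b [ha [n hn]] [hb [m hm]]; split; first exact: NS_mul.
  exists (n * m); rewrite intrM.
  have -> : a * b - n%:~R * m%:~R = (a - n%:~R) * b + (b - m%:~R) * n%:~R by ring.
  apply: mulN_add; apply: mulN_mulr => //; exact: NS_int.
- move=> p Sp; split; first exact: NS_inv.
  exact: inv_rep.
Qed.
End Aux2.

Definition nsel (S : nat -> Prop) (g : nat) (x : rat) : int :=
  match excluded_middle_informative (exists n : int, mulN S g (x - n%:~R)%R) with
  | left H => proj1_sig (constructive_indefinite_description _ H)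
  | right _ => 0%R end.

Lemma nselP S g x : (exists n : int, mulN S g (x - n%:~R)%R) ->
  mulN S g (x - (nsel S g x)%:~R)%R.
Proof.
rewrite /nsel; case: excluded_middle_informative => // H _.
by case: constructive_indefinite_description.
Qed.

Section Aux3.
Local Open Scope ring_scope.
Variable S : nat -> Prop.
Hypothesis hS : forall p, S p -> (0 < p)%N.
Variable g : nat.
Hypothesis g0 : (0 < g)%N.

Lemma nselN x : N_S S x -> mulN S g (x - (nsel S g x)%:~R).
Proof. by move=> hx; apply: nselP; apply: ZgN. Qed.

Lemma embed_gen c : (0 < c)%N ->
  (forall n : int, mulN S g n%:~R <-> (c%:Z %| n)%Z) ->
  quot_embedding S g (fun x => nsel S g x * (g %/ c)%N%:Z).
Proof.
move=> c0 hI.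
have cg : (c %| g)%N by have := mulN_g S g; rewrite pmulrn => /hI; rewrite dvdzE.
set d := (g %/ c)%N.
have gE : g%:Z = d%:Z * c%:Z by rewrite -PoszM /d divnK.
have d0 : d%:Z != 0 by rewrite /d eqz_nat -lt0n divn_gt0 // dvdn_leq.
split.
- move=> x y hx hy; apply/eqP; rewrite eqz_mod_dvd.
  have -> : nsel S g (x + y) * d%:Z - (nsel S g x * d%:Z + nsel S g y * d%:Z)
     = d%:Z * (nsel S g (x + y) - nsel S g x - nsel S g y) by ring.
  rewrite gE dvdz_mul2l //; apply/hI; rewrite !intrB.
  have hxy := nselN (NS_add hx hy); have hx' := nselN hx; have hy' := nselN hy.
  set a := (nsel S g (x + y))%:~R in hxy *.
  set b := (nsel S g x)%:~R in hx' *.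
  set e := (nsel S g y)%:~R in hy' *.
  have -> : a - b - e = (x - b) + (y - e) - (x + y - a) by ring.
  by apply: mulN_sub => //; apply: mulN_add.
- move=> x y hx hy.
  have hx' := nselN hx; have hy' := nselN hy.
  have -> : (nsel S g x * d%:Z = nsel S g y * d%:Z %[mod g%:Z])%Z <->
            mulN S g (nsel S g x - nsel S g y)%:~R.
    split.
    + by move/eqP; rewrite eqz_mod_dvd gE -mulrBl mulrC dvdz_mul2l // => /hI.
    + by move/hI => h; apply/eqP; rewrite eqz_mod_dvd gE -mulrBl mulrC dvdz_mul2l.
  rewrite intrB.
  set b := (nsel S g x)%:~R in hx' *.
  set e := (nsel S g y)%:~R in hy' *.
  split => h.
  + have -> : x - y = (x - b) - (y - e) + (b - e) by ring.
    by apply: mulN_add => //; apply: mulN_sub.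
  + have -> : b - e = (x - y) - (x - b) + (y - e) by ring.
    by apply: mulN_add => //; apply: mulN_sub.
Qed.
End Aux3.

Section Aux4.
Local Open Scope ring_scope.
Variable S : nat -> Prop.
Hypothesis hS : forall p, S p -> (0 < p)%N.
Variable g : nat.
Hypothesis g0 : (0 < g)%N.

Lemma frac (hc : forall p, S p -> coprime p g) y : N_S S y ->
  exists m (a : int), [/\ (0 < m)%N, coprime m g & y * m%:R = a%:~R].
Proof.
move=> hy.
apply: (hy (fun y => exists m (a : int), [/\ (0 < m)%N, coprime m g & y * m%:R = a%:~R])).
- by exists 1%N, 1; split => //; rewrite coprime1n.
- move=> u v [m1 [a1 [m10 c1 E1]]] [m2 [a2 [m20 c2 E2]]].
  exists (m1 * m2)%N, (a1 * m2%:Z - a2 * m1%:Z); split.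
  + by rewrite muln_gt0 m10.
  + by rewrite coprimeMl c1.
  + rewrite intrB !intrM -E1 -E2 natrM /=; ring.
- move=> u v [m1 [a1 [m10 c1 E1]]] [m2 [a2 [m20 c2 E2]]].
  exists (m1 * m2)%N, (a1 * a2); split.
  + by rewrite muln_gt0 m10.
  + by rewrite coprimeMl c1.
  + rewrite intrM -E1 -E2 natrM /=; ring.
- move=> p Sp; exists p, 1; split; [exact: hS | exact: hc|].
  by rewrite mulVf // pnatr_eq0 -lt0n hS.
Qed.

Lemma Ichar_iso (hc : forall p, S p -> coprime p g) (n : int) :
  mulN S g n%:~R <-> (g%:Z %| n)%Z.
Proof.
split; last exact: mulN_int.
move=> [y [hy E]].
have [m [a [m0 cop Ey]]] := frac hc hy.
have E2 : n * m%:Z = g%:Z * a.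
  apply: (@intr_inj rat); rewrite !intrM E -Ey /=; ring.
have : (g%:Z %| n * m%:Z)%Z by rewrite E2 dvdz_mulr.
rewrite Gauss_dvdzl //.
by rewrite /coprimez /gcdz /= gcdnC.
Qed.

Definition pbool (P : Prop) : bool := if excluded_middle_informative P then true else false.
Lemma pboolP (P : Prop) : pbool P <-> P.
Proof. by rewrite /pbool; case: excluded_middle_informative. Qed.

Lemma Ichar_gen : exists c, (0 < c)%N /\
  forall n : int, mulN S g n%:~R <-> (c%:Z %| n)%Z.
Proof.
pose P k := pbool ((0 < k)%N /\ mulN S g k%:R).
have exP : exists k, P k by exists g; apply/pboolP; split => //; apply: mulN_g.
case: (ex_minnP exP) => c /pboolP [c0 hc] cmin.
exists c; split => // n; split.
- move=> hn.
  have hr : mulN S g (n %% c%:Z)%Z%:~R.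
    have -> : (n %% c%:Z)%Z = n - (n %/ c%:Z)%Z * c%:Z by rewrite {2}(divz_eq n c%:Z); ring.
    rewrite intrB intrM; apply: mulN_sub => //.
    rewrite mulrC; apply: mulN_mulr; last exact: NS_int.
    by rewrite pmulrn in hc.
  apply/dvdz_mod0P.
  have r0 : 0 <= (n %% c%:Z)%Z by rewrite modz_ge0 // eqz_nat -lt0n.
  have rlt : (n %% c%:Z)%Z < c%:Z by rewrite ltz_pmod // ltz_nat.
  move: hr r0 rlt; case: (n %% c%:Z)%Z => [k|k] //= hr _.
  case: k hr => [//|k] hr; rewrite ltz_nat => lt.
  have : P k.+1 by apply/pboolP; split => //; rewrite pmulrn.
  by move/cmin; rewrite leqNgt lt.
- case/dvdzP => q ->; rewrite intrM mulrC; apply: mulN_mulr; last exact: NS_int.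
  by rewrite pmulrn in hc.
Qed.
End Aux4.
Unset Implicit Arguments.

Theorem lemma6p11 (S : nat -> Prop) (gS : nat) :
  admissible_set S -> is_gcd_S S gS ->
  quot_iso_Zmod S gS /\
  (forall s : seq nat, (1 <= size s)%N -> smallest_elems S s ->
     quot_embeds_in_Zmod S (gcd_seq s)).
Proof.
move=> [[p0 Sp0] h2 _] [hdiv _].
have hS : forall p, S p -> (0 < p)%N by move=> p /h2; apply: leq_trans.
have g0 : (0 < gS)%N.
  move: (hdiv p0 Sp0); rewrite lt0n; apply: contraL => /eqP ->; rewrite dvd0n.
  by rewrite -subn1 subn_eq0 leqNgt h2.
have hc : forall p, S p -> coprime p gS.
  move=> p Sp; apply: coprime_dvdr (hdiv p Sp) _.
  by rewrite -{1}(prednK (hS p Sp)) coprimeSn.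
split.
- exists (fun x => (nsel S gS x * (gS %/ gS)%N%:Z)%R); split.
    apply: embed_gen => // n; exact: Ichar_iso.
  move=> z; exists z%:~R%R; split; first exact: NS_int.
  have := nselN hS g0 (NS_int (S:=S) z); rewrite -intrB => /(Ichar_iso hS hc) h.
  apply/eqP; rewrite eqz_mod_dvd divnn g0 GRing.mulr1 -GRing.opprB.
  by rewrite dvdzE abszN -dvdzE.
- case=> [//|p s] _ [_ hin _].
  have Sp : S p by apply: hin; rewrite inE eqxx.
  have gp : (0 < gcd_seq (p :: s))%N.
    by rewrite /gcd_seq /= gcdn_gt0 -subn1 subn_gt0 h2.
  have [c [c0 hI]] := Ichar_gen S gp.
  by exists (fun x => (nsel S (gcd_seq (p :: s)) x * (gcd_seq (p :: s) %/ c)%N%:Z)%R); apply: embed_gen.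
Qed.
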